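(* Let $R>0$, $L>0$ and let $N$ be a positive integer. Let $\theta_0=1$, $\theta_i=\frac{1+\sqrt{1+4\theta_{i-1}^2}}{2}$ for $i=1,\dots,N-1$, $\theta_N=\frac{1+\sqrt{1+8\theta_{N-1}^2}}{2}$, and define $\zeta^*=(\zeta^*_0,\dots,\zeta^*_{N+2})$ by $\zeta^*_{N+2}=0$, $\zeta^*_{N+1}=\frac{\theta_N-1}{\theta_N^2(2\theta_N-1)}R^2$, $\zeta^*_N=\frac{\theta_N}{\theta_N-1}\zeta^*_{N+1}$, and $\zeta^*_i=\frac{2\theta_i}{2\theta_i-1}\zeta^*_{i+1}$ for $i=0,\dots,N-1$. Let $e_0,\dots,e_N$ be the standard unit vectors of $\mathbb{R}^{N+1}$ and set \[ x_{N+1}=-\sum_{j=0}^{N}\frac{\zeta^*_j-\zeta^*_{N+2}}{\sqrt{\zeta^*_j-\zeta^*_{j+1}}}e_j,\qquad f_N=\frac L2(\zeta^*_N+\zeta^*_{N+1}). \] Then $\|x_{N+1}\|=R$ and $f_N=\frac{LR^2}{2\theta_N^2}$. *)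

(* Defs.v *)
From mathcomp Require Import all_boot all_order all_algebra.
From mathcomp Require Import reals.
Set Implicit Arguments. Unset Strict Implicit. Unset Printing Implicit Defensive.
Import Order.TTheory GRing.Theory Num.Theory.
Local Open Scope ring_scope.

Definition enorm (R : realType) (n : nat) (v : 'cV[R]_n) : R :=
  Num.sqrt (\sum_(j < n) (v j 0) ^+ 2).

(* Main.v *)
Require Import Defs.
From mathcomp Require Import all_boot all_order all_algebra.
From mathcomp Require Import reals ring lra.
Import Order.TTheory GRing.Theory Num.Theory.
Local Open Scope ring_scope.
Lemma sq_half (R : realType) (c : R) : 0 <= c ->
  ((1 + Num.sqrt c)/2)^+2 - (1 + Num.sqrt c)/2 = (c - 1)/4.
Proof.
move=> c0; have h := sqr_sqrtr c0; set s := Num.sqrt c in h *.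
rewrite -h; field; done.
Qed.

Lemma ge1_half (R : realType) (c : R) : 1 <= c -> 1 <= (1 + Num.sqrt c)/2.
Proof.
move=> c1; have : 1 <= Num.sqrt c by rewrite -sqrtr1 ler_sqrt //; lra.
move=> h; lra.
Qed.

Lemma gt1_half (R : realType) (c : R) : 1 < c -> 1 < (1 + Num.sqrt c)/2.
Proof.
move=> c1; have : 1 < Num.sqrt c by rewrite -sqrtr1 ltr_sqrt //; lra.
move=> h; lra.
Qed.

Lemma term_eq (R : realType) (t a : R) : 1 <= t -> 0 < a ->
  (2 * t / (2 * t - 1) * a) ^+ 2 / (2 * t / (2 * t - 1) * a - a)
  = 2 * t * (2 * t / (2 * t - 1) * a).
Proof.
move=> t1 a0.
have h1 : 2 * t - 1 != 0 by apply/eqP; lra.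
have h2 : a != 0 by apply/eqP; lra.
have -> : 2 * t / (2 * t - 1) * a - a = a / (2 * t - 1) by field.
field; rewrite ?h1 ?h2 //.
Qed.

Theorem lemma3 (R : realType) (r L : R) (N : nat) (theta zeta : nat -> R) :
  0 < r -> 0 < L -> (0 < N)%N ->
  theta 0%N = 1 ->
  (forall i : nat, (1 <= i <= N.-1)%N ->
     theta i = (1 + Num.sqrt (1 + 4 * theta i.-1 ^+ 2)) / 2) ->
  theta N = (1 + Num.sqrt (1 + 8 * theta N.-1 ^+ 2)) / 2 ->
  zeta N.+2 = 0 ->
  zeta N.+1 = (theta N - 1) / (theta N ^+ 2 * (2 * theta N - 1)) * r ^+ 2 ->
  zeta N = theta N / (theta N - 1) * zeta N.+1 ->
  (forall i : nat, (i < N)%N ->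
     zeta i = 2 * theta i / (2 * theta i - 1) * zeta i.+1) ->
  let x := \col_(j < N.+1)
             (- ((zeta j - zeta N.+2) / Num.sqrt (zeta j - zeta j.+1))) in
  let fN := L / 2 * (zeta N + zeta N.+1) in
  enorm x = r /\ fN = L * r ^+ 2 / (2 * theta N ^+ 2).
Proof.
move=> r0 L0 N0 th0 thi thN z2 z1 zN zi x fN.
have thge1 : forall i, (i <= N.-1)%N -> 1 <= theta i.
  elim=> [|i IH] hi; first by rewrite th0.
  rewrite thi; last by rewrite hi.
  apply: ge1_half.
  have := IH (ltnW hi); set t := theta i.+1.-1 => ht.
  have : 0 <= t ^+ 2 by apply: sqr_ge0. lra.
have tN1 : 1 < theta N.
  rewrite thN; apply: gt1_half.
  have := thge1 N.-1 (leqnn _); set t := theta N.-1 => ht.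
  have : 1 <= t ^+ 2 by rewrite expr2; nra. lra.
have hrec : forall i, (1 <= i <= N.-1)%N -> theta i ^+ 2 - theta i = theta i.-1 ^+ 2.
  move=> i hi; rewrite thi // sq_half; last first.
    have : 0 <= theta i.-1 ^+ 2 by apply: sqr_ge0. lra.
  by field.
have hrecN : theta N ^+ 2 - theta N = 2 * theta N.-1 ^+ 2.
  rewrite thN sq_half; last first.
    have : 0 <= theta N.-1 ^+ 2 by apply: sqr_ge0. lra.
  by field.
have z1pos : 0 < zeta N.+1.
  rewrite z1; set t := theta N in tN1 *.
  apply: mulr_gt0; last by apply: exprn_gt0.
  apply: divr_gt0; first lra.
  apply: mulr_gt0; first by apply: exprn_gt0; lra. lra.
have zNgt : zeta N.+1 < zeta N.
  rewrite zN; set t := theta N in tN1 *; set a := zeta N.+1 in z1pos *.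
  have -> : t / (t - 1) * a = a + a / (t - 1) by field; apply/eqP; lra.
  rewrite ltrDl; apply: divr_gt0 => //; lra.
have zpos : forall k, (k <= N)%N -> 0 < zeta (N - k)%N.+1 /\ zeta (N - k)%N.+1 < zeta (N - k)%N.
  elim=> [|k IH] hk; first by rewrite subn0.
  have [h1 h2] := IH (ltnW hk).
  have e : (N - k = (N - k.+1).+1)%N by rewrite subnS prednK // subn_gt0.
  rewrite e in h1 h2; split; first lra.
  rewrite (zi (N - k.+1)%N); last by rewrite ltn_subrL.
  have ht : 1 <= theta (N - k.+1)%N by apply: thge1; rewrite -subn1; apply: leq_sub2l.
  set t := theta _ in ht *; set a := zeta (N - k.+1)%N.+1.
  have ha : 0 < a by rewrite /a; lra.
  have -> : 2 * t / (2 * t - 1) * a = a + a / (2 * t - 1) by field; apply/eqP; lra.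
  rewrite ltrDl; apply: divr_gt0 => //; lra.
have zpos' : forall i, (i <= N)%N -> 0 < zeta i.+1 /\ zeta i.+1 < zeta i.
  by move=> i hi; have := zpos (N - i)%N (leq_subr _ _); rewrite subKn.
have hsum : forall k, (1 <= k <= N)%N ->
   \sum_(j < k) zeta j ^+ 2 / (zeta j - zeta j.+1) = 4 * theta k.-1 ^+ 2 * zeta k.
  elim=> [//|k IH] /andP[_ hk].
  have hk' : (k < N)%N by [].
  have ht : 1 <= theta k by apply: thge1; rewrite -ltnS prednK.
  have [ha _] := zpos' k (ltnW hk).
  rewrite big_ord_recr /= (zi k hk') term_eq //.
  case: k IH hk hk' ht ha => [|k] IH hk hk' ht ha.
    by rewrite big_ord0 th0 add0r; field.
  rewrite IH; last by rewrite /= ltnW.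
  rewrite (zi k.+1 hk') /=.
  have e := hrec k.+1; rewrite /= in e; rewrite -e; last by rewrite -ltnS prednK.
  field; apply/eqP; lra.
split; last first.
  rewrite /fN zN z1; set t := theta N in tN1 *.
  field; repeat (apply/andP; split); apply/eqP; lra.
rewrite /enorm.
have -> : \sum_(j < N.+1) x j 0 ^+ 2 = \sum_(j < N.+1) zeta j ^+ 2 / (zeta j - zeta j.+1).
  apply: eq_bigr => j _; rewrite /x mxE z2 subr0 sqrrN expr_div_n sqr_sqrtr //.
  have [h1 h2] := zpos' j (ltn_ord j); lra.
rewrite big_ord_recr /= hsum; last by rewrite N0 leqnn.
have -> : 4 * theta N.-1 ^+ 2 = 2 * (theta N ^+ 2 - theta N) by rewrite hrecN; ring.
rewrite zN z1; set t := theta N in tN1 *.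
have -> : t / (t - 1) * ((t - 1) / (t ^+ 2 * (2 * t - 1)) * r ^+ 2) = r ^+ 2 / (t * (2 * t - 1)).
  field; repeat (apply/andP; split); apply/eqP; lra.
have -> : 2 * (t ^+ 2 - t) * (r ^+ 2 / (t * (2 * t - 1))) +
  (r ^+ 2 / (t * (2 * t - 1))) ^+ 2 / (r ^+ 2 / (t * (2 * t - 1)) -
  (t - 1) / (t ^+ 2 * (2 * t - 1)) * r ^+ 2) = r ^+ 2.
  field; have hr2 : 0 < r ^+ 2 by apply: exprn_gt0.
  have -> : r ^+ 2 * t - (t - 1) * r ^+ 2 = r ^+ 2 by ring.
  repeat (apply/andP; split); apply/eqP; lra.
have := sqrtr_sqr r; rewrite gtr0_norm // => <-; reflexivity.
Qed.
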